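(* Let $(\lambda_k)_{k=-\infty}^\infty$ be a strictly increasing sequence of real numbers and $\delta_k:=\min\{\lambda_k-\lambda_{k-1},\lambda_{k+1}-\lambda_k\}$. Then for every positive integer $N$ and all nonnegative real numbers $t_1,\dots,t_N$, $$\sum_{m=1}^N\sum_{\substack{n=1\\ n\ne m}}^N\frac{\delta_m\delta_nt_mt_n}{(\lambda_m-\lambda_n)^2}\le\frac{\pi^2}{3}\sum_{n=1}^N t_n^2.$$ *)

(* Defs.v *)
From Stdlib Require Export Reals ZArith.
Open Scope R_scope.

Definition strictly_increasing_Z (lam : Z -> R) : Prop :=
  forall j k : Z, (j < k)%Z -> lam j < lam k.

Definition delta (lam : Z -> R) (k : Z) : R :=
  Rmin (lam k - lam (k - 1)%Z) (lam (k + 1)%Z - lam k).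

Fixpoint sum1 (N : nat) (f : nat -> R) : R :=
  match N with
  | O => 0
  | S n => sum1 n f + f (S n)
  end.

(* Main.v *)
Require Import Defs.
From Stdlib Require Import Reals ZArith.
From Stdlib Require Import Lra Lia Psatz.
Open Scope R_scope.


Lemma sum1_ext N f g : (forall i, (1 <= i <= N)%nat -> f i = g i) -> sum1 N f = sum1 N g.
Proof. induction N; simpl; intros H; auto. rewrite IHN by (intros; apply H; lia). rewrite H by lia. auto. Qed.

Lemma sum1_le N f g : (forall i, (1 <= i <= N)%nat -> f i <= g i) -> sum1 N f <= sum1 N g.
Proof. induction N; simpl; intros H; [lra|]. assert (H1:=H (S N)). assert (sum1 N f <= sum1 N g) by (apply IHN; intros; apply H; lia). specialize (H1 ltac:(lia)). lra. Qed.

Lemma sum1_plus N f g : sum1 N (fun i => f i + g i) = sum1 N f + sum1 N g.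
Proof. induction N; simpl; [lra|]. rewrite IHN; lra. Qed.

Lemma sum1_scal N c f : sum1 N (fun i => c * f i) = c * sum1 N f.
Proof. induction N; simpl; [lra|]. rewrite IHN; lra. Qed.

Lemma sum1_nonneg N f : (forall i, (1 <= i <= N)%nat -> 0 <= f i) -> 0 <= sum1 N f.
Proof. intros H. replace 0 with (sum1 N (fun _ => 0)). apply sum1_le; auto.
 clear H; induction N; simpl; auto; lra. Qed.

Lemma sum1_swap N M (g : nat -> nat -> R) :
  sum1 N (fun m => sum1 M (fun n => g m n)) = sum1 M (fun n => sum1 N (fun m => g m n)).
Proof. induction N; simpl.
 - clear. induction M; simpl; auto; lra.
 - rewrite IHN. rewrite <- sum1_plus. auto. Qed.

Lemma sum1_split a b f : sum1 (a + b) f = sum1 a f + sum1 b (fun i => f (a + i)%nat).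
Proof. induction b; simpl. rewrite Nat.add_0_r; lra. rewrite Nat.add_succ_r. simpl. rewrite IHb. lra. Qed.

Lemma sum1_shift n f : sum1 (S n) f = f 1%nat + sum1 n (fun i => f (S i)).
Proof. induction n; simpl; [lra|]. simpl in IHn. rewrite IHn. lra. Qed.

Lemma sum1_rev n f : sum1 n f = sum1 n (fun i => f (S n - i)%nat).
Proof. induction n. reflexivity. rewrite (sum1_shift n (fun i => f (S (S n) - i)%nat)).
 change (sum1 (S n) f) with (sum1 n f + f (S n)). rewrite IHn.
 replace (S (S n) - 1)%nat with (S n) by lia.
 rewrite (sum1_ext n (fun i => f (S n - i)%nat) (fun i => f (S (S n) - S i)%nat)). lra.
 intros; f_equal; lia. Qed.

Lemma sum1_evenodd M g : sum1 (2 * M) g = sum1 M (fun k => g (2 * k - 1)%nat) + sum1 M (fun k => g (2 * k)%nat).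
Proof. induction M. simpl; lra. replace (2 * S M)%nat with (S (S (2 * M))) by lia.
 change (sum1 (S (S (2 * M))) g) with (sum1 (2*M) g + g (S (2*M)) + g (S (S (2*M)))).
 change (sum1 (S M) (fun k => g (2 * k - 1)%nat)) with (sum1 M (fun k => g (2 * k - 1)%nat) + g (2 * S M - 1)%nat).
 change (sum1 (S M) (fun k => g (2 * k)%nat)) with (sum1 M (fun k => g (2 * k)%nat) + g (2 * S M)%nat).
 rewrite IHM. replace (2 * S M - 1)%nat with (S (2*M)) by lia.
 replace (2 * S M)%nat with (S (S (2*M))) by lia. lra. Qed.

Lemma sum1_mono N M f : (N <= M)%nat -> (forall i, 0 <= f i) -> sum1 N f <= sum1 M f.
Proof. intros H Hf. replace M with (N + (M - N))%nat by lia. rewrite sum1_split.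
 assert (0 <= sum1 (M - N) (fun i => f (N + i)%nat)) by (apply sum1_nonneg; auto). lra. Qed.

Lemma INR_ge1 k : (1 <= k)%nat -> 1 <= INR k.
Proof. intros; change 1 with (INR 1); apply le_INR; auto. Qed.

Definition c2 x := / (sin x) ^ 2.

Lemma csc_double x : 0 < x < PI ->
  c2 x = / 4 * (c2 (x / 2) + c2 (PI / 2 - x / 2)).
Proof. intros [H1 H2]. unfold c2. rewrite sin_shift.
 replace x with (2 * (x/2)) at 1 by field. rewrite sin_2a.
 assert (Hs : 0 < sin (x/2)) by (apply sin_gt_0; lra).
 assert (Hc : 0 < cos (x/2)) by (apply cos_gt_0; lra).
 assert (E := sin2_cos2 (x/2)). unfold Rsqr in E.
 field_simplify; try lra. rewrite <- E at 1. field. lra. Qed.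

Definition U (M : nat) := sum1 M (fun k => c2 ((2 * INR k - 1) * PI / (4 * INR M))).

Lemma U_double M : (1 <= M)%nat -> U (2 * M) = 4 * U M.
Proof. intros HM. unfold U.
 assert (HMr : 1 <= INR M) by (apply INR_ge1; lia).
 assert (HP := PI_RGT_0).
 replace (2 * M)%nat with (M + M)%nat by lia. rewrite sum1_split.
 rewrite (sum1_ext M (fun k => c2 ((2 * INR k - 1) * PI / (4 * INR M))) (fun k => / 4 * (c2 ((2 * INR k - 1) * PI / (4 * INR (M + M)))
     + c2 (PI / 2 - (2 * INR k - 1) * PI / (4 * INR (M + M)))))).
 2:{ intros k Hk. assert (Hk1 : 1 <= INR k <= INR M) by (split; [apply INR_ge1|apply le_INR]; lia).
   rewrite (csc_double ((2 * INR k - 1) * PI / (4 * INR M))). rewrite plus_INR.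
   replace ((2 * INR k - 1) * PI / (4 * INR M) / 2) with ((2 * INR k - 1) * PI / (4 * (INR M + INR M))) by (field; lra).
   auto.
   split. apply Rdiv_lt_0_compat; nra. apply Rmult_lt_reg_r with (4 * INR M). lra.
   field_simplify; nra. }
 rewrite sum1_scal, sum1_plus.
 rewrite (sum1_rev M (fun k => c2 (PI / 2 - (2 * INR k - 1) * PI / (4 * INR (M + M))))).
 rewrite (sum1_ext M (fun i => c2 (PI / 2 - (2 * INR (S M - i) - 1) * PI / (4 * INR (M + M))))
   (fun i => c2 ((2 * INR (M + i) - 1) * PI / (4 * INR (M + M))))).
 field.
 intros i Hi. f_equal. rewrite minus_INR by lia. rewrite !plus_INR, S_INR. field. lra.
Qed.

Lemma sin_PI4_sq : sin (PI/4) ^ 2 = / 2.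
Proof. rewrite sin_PI4. assert (H := sqrt_sqrt 2 ltac:(lra)).
 assert (0 < sqrt 2) by (apply sqrt_lt_R0; lra). replace ((1 / sqrt 2) ^ 2) with (/ (sqrt 2 * sqrt 2)) by (field; lra). rewrite H. auto. Qed.

Lemma U_pow n : U (2 ^ n) = 2 * 4 ^ n.
Proof. induction n.
 - unfold U; simpl. unfold c2.  replace ((2 * 1 - 1) * PI / (4 * 1)) with (PI/4) by field.
   rewrite sin_PI4_sq. field.
 - change (2 ^ S n)%nat with (2 * 2 ^ n)%nat. rewrite U_double. rewrite IHn. simpl; ring.
   clear. induction n; simpl; lia.
Qed.

Definition S2 (K : nat) := sum1 K (fun j => / (INR j) ^ 2).
Definition O2 (K : nat) := sum1 K (fun k => / (2 * INR k - 1) ^ 2).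

Lemma U_lower M : (1 <= M)%nat -> 16 * (INR M) ^ 2 / PI ^ 2 * O2 M <= U M.
Proof. intros HM. unfold O2, U. rewrite <- sum1_scal. apply sum1_le. intros k Hk.
 assert (HMr : 1 <= INR M) by (apply INR_ge1; lia).
 assert (Hk1 : 1 <= INR k <= INR M) by (split; [apply INR_ge1|apply le_INR]; lia).
 assert (HP := PI_RGT_0).
 set (x := (2 * INR k - 1) * PI / (4 * INR M)).
 assert (Hx : 0 < x) by (unfold x; apply Rdiv_lt_0_compat; nra).
 assert (Hx2 : x < PI) by (unfold x; apply Rmult_lt_reg_r with (4 * INR M); [lra|]; field_simplify; nra).
 assert (Hs := sin_gt_0 x Hx Hx2). assert (Hl := sin_lt_x x Hx).
 unfold c2. replace (16 * INR M ^ 2 / PI ^ 2 * / (2 * INR k - 1) ^ 2) with (/ x ^ 2).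
 apply Rinv_le_contravar. nra. apply pow_incr; lra.
 unfold x. field. split; nra.
Qed.

Lemma O2_pow n : O2 (2 ^ n) <= PI ^ 2 / 8.
Proof. assert (H1 : (1 <= 2 ^ n)%nat) by (induction n; simpl; lia).
 assert (H := U_lower _ H1). rewrite U_pow in H.
 assert (E : INR (2 ^ n) = 2 ^ n) by (rewrite pow_INR; f_equal; simpl; ring). rewrite E in H.
 assert (E4 : forall m, 4 ^ m = (2 ^ m) ^ 2) by (induction m; simpl; [ring|]; rewrite IHm; ring). rewrite E4 in H.
 assert (HP := PI_RGT_0). assert (0 < 2 ^ n) by (apply pow_lt; lra).
 set (q := 2 ^ n) in *. set (o := O2 _) in *.
 apply Rmult_le_reg_l with (16 * q ^ 2 / PI ^ 2). apply Rdiv_lt_0_compat; nra.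
 replace (16 * q ^ 2 / PI ^ 2 * (PI ^ 2 / 8)) with (2 * q ^ 2) by (field; lra). lra.
Qed.

Lemma S2_nonneg_terms : forall j, 0 <= / INR j ^ 2.
Proof. intros j. destruct j. simpl. rewrite Rmult_0_l, Rinv_0; lra.
 apply Rlt_le, Rinv_0_lt_compat, pow_lt, lt_0_INR; lia. Qed.

Lemma S2_double M : S2 (2 * M) = O2 M + / 4 * S2 M.
Proof. unfold S2, O2. rewrite sum1_evenodd. f_equal.
 - apply sum1_ext; intros k Hk. rewrite minus_INR by lia. rewrite mult_INR. simpl. repeat f_equal; try ring.
 - rewrite <- sum1_scal. apply sum1_ext; intros k Hk. rewrite mult_INR. simpl.
   assert (0 < INR k) by (apply lt_0_INR; lia). field. lra.
Qed.

Lemma basel_bound K : S2 K <= PI ^ 2 / 6.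
Proof. assert (HK : (1 <= 2 ^ K /\ K <= 2 * 2 ^ K)%nat) by (induction K; simpl; lia). destruct HK as [_ HK].
 assert (Hm : S2 K <= S2 (2 * 2 ^ K)) by (apply sum1_mono; auto; apply S2_nonneg_terms).
 assert (Hm2 : S2 (2 ^ K) <= S2 (2 * 2 ^ K)) by (apply sum1_mono; [lia| apply S2_nonneg_terms]).
 assert (E := S2_double (2 ^ K)). assert (Ho := O2_pow K). lra.
Qed.

Definition L (k : nat) (z : R) := S2 k + (z - INR k) / (INR k + 1) ^ 2.
Definition Inv (M s : R) := forall k : nat, s <= L k M.

Lemma L_step i z : z <= INR i + 1 -> L i z <= L (S i) z.
Proof. intros H. unfold L, S2. change (sum1 (S i) (fun j => / INR j ^ 2)) with
  (sum1 i (fun j => / INR j ^ 2) + / INR (S i) ^ 2). rewrite S_INR.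
 assert (0 <= INR i) by apply pos_INR.
 set (s := sum1 i _). set (c := INR i) in *.
 assert (E : s + / (c + 1) ^ 2 + (z - (c + 1)) / (c + 1 + 1) ^ 2 - (s + (z - c) / (c + 1) ^ 2)
   = (c + 1 - z) * (/ (c + 1) ^ 2 - / (c + 1 + 1) ^ 2)) by (field; lra).
 assert (0 <= / (c + 1) ^ 2 - / (c + 1 + 1) ^ 2).
 { assert (/ (c + 1 + 1) ^ 2 <= / (c + 1) ^ 2). apply Rinv_le_contravar. nra. apply pow_incr; lra. lra. }
 nra. Qed.

Lemma L_chain j k z : (j <= k)%nat -> z <= INR j + 1 -> L j z <= L k z.
Proof. intros H Hz. induction H. lra. apply Rle_trans with (L m z). auto.
 apply L_step. assert (INR j <= INR m) by (apply le_INR; auto). lra. Qed.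

Lemma tang y C : 0 < y -> 0 < C -> / C ^ 2 - 2 * (y - C) / C ^ 3 <= / y ^ 2.
Proof. intros Hy HC.
 assert (E : / y ^ 2 - (/ C ^ 2 - 2 * (y - C) / C ^ 3) = (y - C) ^ 2 * (2 * y + C) / (y ^ 2 * C ^ 3)) by (field; lra).
 assert (0 <= (y - C) ^ 2 * (2 * y + C) / (y ^ 2 * C ^ 3)).
 { unfold Rdiv. apply Rmult_le_pos. apply Rmult_le_pos. apply pow2_ge_0. lra. apply Rlt_le, Rinv_0_lt_compat, Rmult_lt_0_compat; apply pow_lt; lra. }
 lra. Qed.

Lemma floor_ex a : 0 <= a -> exists j : nat, INR j <= a < INR j + 1.
Proof. intros Ha. destruct (INR_archimed 1 a ltac:(lra)) as [n Hn]. rewrite Rmult_1_r in Hn.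
 induction n. simpl in Hn; lra.
 destruct (Rlt_or_le a (INR n)). auto. exists n. rewrite S_INR in Hn. lra. Qed.

Lemma key_ineq (A a e : R) : 1 <= A -> A - 1 <= a < A -> 0 < e <= 1 ->
  e / (a + 1) ^ 2 <= (A - a) / A ^ 2 + (e - (A - a)) / (A + 1) ^ 2.
Proof. intros HA Ha He. set (p := A - a). set (C := a + 1).
 assert (Hp : 0 < p <= 1) by (unfold p; lra).
 destruct (Rle_or_lt e p).
 - assert (h1 : / (A + 1) ^ 2 <= / A ^ 2) by (apply Rinv_le_contravar; [nra| apply pow_incr; lra]).
   assert (h2 : / C ^ 2 <= / A ^ 2) by (apply Rinv_le_contravar; [nra| apply pow_incr; unfold C; lra]).
   unfold Rdiv. nra.
 - assert (t1 := tang A C ltac:(lra) ltac:(unfold C; lra)).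
   assert (t2 := tang (A + 1) C ltac:(lra) ltac:(unfold C; lra)).
   assert (HC : 0 < C) by (unfold C; lra).
   assert (HC3 : 0 < / C ^ 3) by (apply Rinv_0_lt_compat, pow_lt; lra).
   assert (E1 : A - C = p - 1) by (unfold p, C; lra). assert (E2 : A + 1 - C = p) by (unfold p, C; lra).
   rewrite E1 in t1. rewrite E2 in t2. unfold Rdiv in *.
   assert (p * (/ C ^ 2 - 2 * (p - 1) * / C ^ 3) <= p * / A ^ 2) by (apply Rmult_le_compat_l; lra).
   assert ((e - p) * (/ C ^ 2 - 2 * p * / C ^ 3) <= (e - p) * / (A + 1) ^ 2) by (apply Rmult_le_compat_l; lra).
   assert (0 <= p * (1 - e) * / C ^ 3) by (apply Rmult_le_pos; [apply Rmult_le_pos|]; lra).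
   nra.
Qed.

Lemma step_unit a s e y : Inv a s -> 0 <= a -> 0 < e <= 1 -> a + 1 <= y -> Inv (a + e) (s + e / y ^ 2).
Proof. intros HI Ha He Hy k. destruct (floor_ex a Ha) as [j Hj].
 destruct (le_lt_dec k j) as [Hkj|Hkj].
 - assert (HK : INR k <= INR j) by (apply le_INR; auto). assert (0 <= INR k) by apply pos_INR.
   assert (H1 := HI k). unfold L in *.
   assert (e / y ^ 2 <= e / (INR k + 1) ^ 2).
   { unfold Rdiv. apply Rmult_le_compat_l. lra. apply Rinv_le_contravar. nra. apply pow_incr; lra. }
   assert (E : S2 k + (a + e - INR k) / (INR k + 1) ^ 2 = S2 k + (a - INR k) / (INR k + 1) ^ 2 + e / (INR k + 1) ^ 2) by (field; lra).
   lra.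
 - apply Rle_trans with (L (S j) (a + e)).
   2:{ apply L_chain. lia. rewrite S_INR. lra. }
   assert (H1 := HI j). apply Rle_trans with (L j a + e / (a + 1) ^ 2).
   + assert (e / y ^ 2 <= e / (a + 1) ^ 2).
     { unfold Rdiv. apply Rmult_le_compat_l. lra. apply Rinv_le_contravar. nra. apply pow_incr; lra. }
     lra.
   + unfold L. change (S2 (S j)) with (S2 j + / INR (S j) ^ 2). rewrite S_INR.
     assert (0 <= INR j) by apply pos_INR.
     assert (K := key_ineq (INR j + 1) a e ltac:(lra) ltac:(lra) He).
     assert (E1 : (INR j + 1 - a) / (INR j + 1) ^ 2 = / (INR j + 1) ^ 2 - (a - INR j) / (INR j + 1) ^ 2) by (field; lra).
     assert (E2 : (a + e - (INR j + 1)) / (INR j + 1 + 1) ^ 2 = (e - (INR j + 1 - a)) / (INR j + 1 + 1) ^ 2) by (f_equal; ring).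
     lra.
Qed.

Lemma Inv_weaken M s s' : s' <= s -> Inv M s -> Inv M s'.
Proof. intros H HI k. specialize (HI k). lra. Qed.

Lemma step_n n : forall a s d y, Inv a s -> 0 <= a -> 0 < d <= INR n + 1 -> a + 1 <= y -> a + d <= y ->
  Inv (a + d) (s + d / y ^ 2).
Proof. induction n; intros a s d y HI Ha Hd Hy1 Hy2.
 - simpl in Hd. apply step_unit; auto; lra.
 - destruct (Rle_or_lt d 1). apply step_unit; auto; lra.
   rewrite S_INR in Hd.
   assert (U1 := step_unit a s 1 (a + 1) HI Ha ltac:(lra) ltac:(lra)).
   assert (Hyp : 0 < a + d) by lra.
   assert (Hdy : d / y ^ 2 <= d / (a + d) ^ 2).
   { unfold Rdiv. apply Rmult_le_compat_l. lra. apply Rinv_le_contravar. nra. apply pow_incr; lra. }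
   destruct (Rle_or_lt (d - 1) 1).
   + assert (U2 := IHn (a + 1) _ (d - 1) (a + 2) U1 ltac:(lra) ltac:(lra) ltac:(lra) ltac:(lra)).
     replace (a + 1 + (d - 1)) with (a + d) in U2 by ring.
     eapply Inv_weaken; [|exact U2].
     assert (d / (a + d) ^ 2 <= 1 / (a + 1) ^ 2 + (d - 1) / (a + 2) ^ 2).
     { assert (C := a + d).
       assert (t1 := tang (a + 1) (a + d) ltac:(lra) ltac:(lra)).
       assert (t2 := tang (a + 2) (a + d) ltac:(lra) ltac:(lra)).
       assert (HC3 : 0 < / (a + d) ^ 3) by (apply Rinv_0_lt_compat, pow_lt; lra).
       unfold Rdiv in *.
       assert ((d - 1) * (/ (a + d) ^ 2 - 2 * (a + 2 - (a + d)) * / (a + d) ^ 3) <= (d - 1) * / (a + 2) ^ 2)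
         by (apply Rmult_le_compat_l; lra).
       assert (0 <= (d - 1) ^ 2 * / (a + d) ^ 3) by (apply Rmult_le_pos; [apply pow2_ge_0|lra]).
       nra. }
     lra.
   + assert (U2 := IHn (a + 1) _ (d - 1) (a + d) U1 ltac:(lra) ltac:(lra) ltac:(lra) ltac:(lra)).
     replace (a + 1 + (d - 1)) with (a + d) in U2 by ring.
     eapply Inv_weaken; [|exact U2].
     assert (/ (a + d) ^ 2 <= / (a + 1) ^ 2) by (apply Rinv_le_contravar; [nra| apply pow_incr; lra]).
     assert (E : d / (a + d) ^ 2 = / (a + d) ^ 2 + (d - 1) / (a + d) ^ 2) by (field; lra).
     unfold Rdiv in *. lra.
Qed.

Lemma step_gen a s d y : Inv a s -> 0 <= a -> 0 < d -> a + 1 <= y -> a + d <= y ->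
  Inv (a + d) (s + d / y ^ 2).
Proof. intros. destruct (INR_archimed 1 d ltac:(lra)) as [n Hn]. apply (step_n n); auto. lra. Qed.

Lemma Inv_final M s : Inv M s -> s <= PI ^ 2 / 6.
Proof. intros HI. destruct (INR_archimed 1 M ltac:(lra)) as [n Hn]. rewrite Rmult_1_r in Hn.
 specialize (HI n). unfold L in HI. assert (0 <= INR n) by apply pos_INR.
 assert (0 < / (INR n + 1) ^ 2) by (apply Rinv_0_lt_compat, pow_lt; lra).
 assert ((M - INR n) * / (INR n + 1) ^ 2 <= 0) by nra.
 assert (Hb := basel_bound n). unfold Rdiv in HI. lra. Qed.

Lemma Inv_zero : Inv 0 0.
Proof. intros k. apply Rle_trans with (L 0 0). unfold L, S2. simpl. lra.
 apply L_chain. lia. simpl; lra. Qed.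

Lemma AL (d : R) (K : nat) (x e : nat -> R) : 0 < d ->
  (forall i, (1 <= i <= K)%nat -> 0 < e i /\ sum1 i e <= x i /\ sum1 (i - 1) e + d <= x i) ->
  d * sum1 K (fun i => e i / x i ^ 2) <= PI ^ 2 / 6.
Proof. intros Hd H. apply (Inv_final (sum1 K e / d)).
 induction K.
 - simpl. replace (0 / d) with 0 by (field; lra). replace (d * 0) with 0 by ring. apply Inv_zero.
 - assert (IH := IHK ltac:(intros; apply H; lia)).
   destruct (H (S K) ltac:(lia)) as (He & Hx1 & Hx2).
   replace (S K - 1)%nat with K in Hx2 by lia.
   change (sum1 (S K) e) with (sum1 K e + e (S K)) in *.
   change (sum1 (S K) (fun i => e i / x i ^ 2)) with (sum1 K (fun i => e i / x i ^ 2) + e (S K) / x (S K) ^ 2).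
   assert (Hs : 0 <= sum1 K e) by (apply sum1_nonneg; intros; apply Rlt_le, H; lia).
   assert (Hxp : 0 < x (S K)) by lra.
   assert (G := step_gen (sum1 K e / d) _ (e (S K) / d) (x (S K) / d) IH).
   replace ((sum1 K e + e (S K)) / d) with (sum1 K e / d + e (S K) / d) by (field; lra).
   replace (d * (sum1 K (fun i => e i / x i ^ 2) + e (S K) / x (S K) ^ 2)) with
     (d * sum1 K (fun i => e i / x i ^ 2) + e (S K) / d / (x (S K) / d) ^ 2) by (field; lra).
   apply G.
   + unfold Rdiv; apply Rmult_le_pos; [lra| apply Rlt_le, Rinv_0_lt_compat; lra].
   + apply Rdiv_lt_0_compat; lra.
   + apply Rmult_le_reg_r with d; [lra|]. field_simplify; lra.
   + apply Rmult_le_reg_r with d; [lra|]. field_simplify; lra.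
Qed.

Lemma delta_pos lam k : strictly_increasing_Z lam -> 0 < delta lam k.
Proof. intros H. unfold delta. assert (H1 := H (k - 1)%Z k ltac:(lia)).
 assert (H2 := H k (k + 1)%Z ltac:(lia)). apply Rmin_glb_lt; lra. Qed.

Lemma delta_le_l lam k : delta lam k <= lam k - lam (k - 1)%Z.
Proof. apply Rmin_l. Qed.
Lemma delta_le_r lam k : delta lam k <= lam (k + 1)%Z - lam k.
Proof. apply Rmin_r. Qed.

Lemma right_side lam (Hinc : strictly_increasing_Z lam) (m : Z) (K : nat) :
  delta lam m * sum1 K (fun i => delta lam (m + Z.of_nat i)%Z / (lam (m + Z.of_nat i)%Z - lam m) ^ 2)
  <= PI ^ 2 / 6.
Proof. apply AL. apply delta_pos; auto.
 set (e := fun i : nat => delta lam (m + Z.of_nat i)%Z).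
 assert (S1 : forall i, sum1 i e <= lam (m + Z.of_nat i)%Z - lam m).
 { induction i. simpl. rewrite Z.add_0_r. lra.
   change (sum1 (S i) e) with (sum1 i e + e (S i)).
   assert (h : e (S i) <= lam (m + Z.of_nat (S i))%Z - lam (m + Z.of_nat i)%Z).
   { unfold e. assert (h := delta_le_l lam (m + Z.of_nat (S i))%Z).
     replace (m + Z.of_nat (S i) - 1)%Z with (m + Z.of_nat i)%Z in h by lia. exact h. }
   lra. }
 assert (S2' : forall i, sum1 i e <= lam (m + Z.of_nat (S i))%Z - lam (m + 1)%Z).
 { induction i. simpl. replace (m + 1)%Z with (m + Z.of_nat 1)%Z by lia. lra.
   change (sum1 (S i) e) with (sum1 i e + e (S i)).
   assert (h : e (S i) <= lam (m + Z.of_nat (S (S i)))%Z - lam (m + Z.of_nat (S i))%Z).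
   { unfold e. assert (h := delta_le_r lam (m + Z.of_nat (S i))%Z).
     replace (m + Z.of_nat (S i) + 1)%Z with (m + Z.of_nat (S (S i)))%Z in h by lia. exact h. }
   lra. }
 intros i Hi. split; [|split].
 - apply delta_pos; auto.
 - apply S1.
 - assert (h := S2' (i - 1)%nat). replace (S (i - 1)) with i in h by lia.
   assert (h2 := delta_le_r lam m). lra.
Qed.

Lemma delta_refl lam m k : delta (fun j => - lam (2 * m - j)%Z) k = delta lam (2 * m - k)%Z.
Proof. unfold delta. cbv beta. rewrite Rmin_comm.
 replace (2 * m - (k - 1))%Z with (2 * m - k + 1)%Z by lia.
 replace (2 * m - (k + 1))%Z with (2 * m - k - 1)%Z by lia.
 set (a := lam (2 * m - k - 1)%Z). set (b := lam (2 * m - k)%Z). set (c := lam (2 * m - k + 1)%Z).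
 replace (- a - - b) with (b - a) by ring. replace (- b - - c) with (c - b) by ring. reflexivity. Qed.

Lemma left_side lam (Hinc : strictly_increasing_Z lam) (m : Z) (K : nat) :
  delta lam m * sum1 K (fun i => delta lam (m - Z.of_nat i)%Z / (lam m - lam (m - Z.of_nat i)%Z) ^ 2)
  <= PI ^ 2 / 6.
Proof. set (lam' := fun j => - lam (2 * m - j)%Z).
 assert (Hinc' : strictly_increasing_Z lam').
 { intros j k H. unfold lam'. assert (lam (2 * m - k)%Z < lam (2 * m - j)%Z) by (apply Hinc; lia). lra. }
 assert (R := right_side lam' Hinc' m K).
 unfold lam' in R. rewrite !delta_refl in R.
 replace (2 * m - m)%Z with m in R by lia.
 eapply Rle_trans; [|exact R]. right. f_equal. apply sum1_ext. intros i Hi.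
 replace (2 * m - (m + Z.of_nat i))%Z with (m - Z.of_nat i)%Z by lia. rewrite delta_refl.
 replace (2 * m - (m + Z.of_nat i))%Z with (m - Z.of_nat i)%Z by lia.
 replace (- lam (m - Z.of_nat i)%Z - - lam m) with (lam m - lam (m - Z.of_nat i)%Z) by ring. reflexivity.
Qed.

Definition Kf (lam : Z -> R) (m n : nat) : R :=
  if Nat.eqb n m then 0
  else delta lam (Z.of_nat m) * delta lam (Z.of_nat n) / (lam (Z.of_nat m) - lam (Z.of_nat n)) ^ 2.

Lemma Kf_sym lam m n : Kf lam m n = Kf lam n m.
Proof. unfold Kf. rewrite Nat.eqb_sym. destruct (Nat.eqb m n); auto.
 replace ((lam (Z.of_nat n) - lam (Z.of_nat m)) ^ 2) with ((lam (Z.of_nat m) - lam (Z.of_nat n)) ^ 2) by ring.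
 f_equal; ring. Qed.

Lemma inv_nonneg x : 0 <= x -> 0 <= / x.
Proof. intros H. destruct (Rle_lt_or_eq_dec 0 x H). apply Rlt_le, Rinv_0_lt_compat; auto.
 subst. rewrite Rinv_0; lra. Qed.

Lemma Kf_nonneg lam (Hinc : strictly_increasing_Z lam) m n : 0 <= Kf lam m n.
Proof. unfold Kf. destruct (Nat.eqb n m). lra. unfold Rdiv. apply Rmult_le_pos.
 apply Rmult_le_pos; apply Rlt_le, delta_pos; auto. apply inv_nonneg, pow2_ge_0. Qed.

Lemma row_bound lam (Hinc : strictly_increasing_Z lam) N m : (1 <= m <= N)%nat ->
  sum1 N (fun n => Kf lam m n) <= PI ^ 2 / 3.
Proof. intros Hm.
 replace N with ((m - 1) + S (N - m))%nat at 1 by lia. rewrite sum1_split, sum1_shift.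
 replace (m - 1 + 1)%nat with m by lia.
 assert (E0 : Kf lam m m = 0) by (unfold Kf; rewrite Nat.eqb_refl; auto). rewrite E0.
 assert (HR := right_side lam Hinc (Z.of_nat m) (N - m)).
 assert (HL := left_side lam Hinc (Z.of_nat m) (m - 1)).
 rewrite <- sum1_scal in HR, HL.
 rewrite (sum1_ext (N - m) _ (fun i => delta lam (Z.of_nat m) *
   (delta lam (Z.of_nat m + Z.of_nat i)%Z / (lam (Z.of_nat m + Z.of_nat i)%Z - lam (Z.of_nat m)) ^ 2))).
 2:{ intros i Hi. unfold Kf. replace (Nat.eqb (m - 1 + S i) m) with false by (symmetry; apply Nat.eqb_neq; lia).
   replace (Z.of_nat (m - 1 + S i)) with (Z.of_nat m + Z.of_nat i)%Z by lia.
   replace ((lam (Z.of_nat m) - lam (Z.of_nat m + Z.of_nat i)%Z) ^ 2) with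
     ((lam (Z.of_nat m + Z.of_nat i)%Z - lam (Z.of_nat m)) ^ 2) by ring.
   unfold Rdiv; ring. }
 rewrite sum1_rev.
 rewrite (sum1_ext (m - 1) _ (fun i => delta lam (Z.of_nat m) *
   (delta lam (Z.of_nat m - Z.of_nat i)%Z / (lam (Z.of_nat m) - lam (Z.of_nat m - Z.of_nat i)%Z) ^ 2))).
 2:{ intros i Hi. unfold Kf. replace (Nat.eqb (S (m - 1) - i) m) with false by (symmetry; apply Nat.eqb_neq; lia).
   replace (Z.of_nat (S (m - 1) - i)) with (Z.of_nat m - Z.of_nat i)%Z by lia.
   unfold Rdiv; ring. }
 lra.
Qed.

Theorem proposition4 (lam : Z -> R) (Hinc : strictly_increasing_Z lam)
  (N : nat) (HN : (1 <= N)%nat) (t : nat -> R)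
  (Ht : forall n : nat, (1 <= n <= N)%nat -> 0 <= t n) :
  sum1 N (fun m =>
    sum1 N (fun n =>
      if Nat.eqb n m then 0
      else delta lam (Z.of_nat m) * delta lam (Z.of_nat n) * t m * t n
           / (lam (Z.of_nat m) - lam (Z.of_nat n)) ^ 2))
  <= PI ^ 2 / 3 * sum1 N (fun n => t n ^ 2).
Proof.
 apply Rle_trans with (sum1 N (fun m => sum1 N (fun n =>
   Kf lam m n * (t m ^ 2 / 2) + Kf lam m n * (t n ^ 2 / 2)))).
 { apply sum1_le; intros m Hm; apply sum1_le; intros n Hn.
   assert (Hk := Kf_nonneg lam Hinc m n).
   assert (E : (if Nat.eqb n m then 0
      else delta lam (Z.of_nat m) * delta lam (Z.of_nat n) * t m * t n
           / (lam (Z.of_nat m) - lam (Z.of_nat n)) ^ 2) = Kf lam m n * (t m * t n)).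
   { unfold Kf. destruct (Nat.eqb n m). ring. unfold Rdiv; ring. }
   rewrite E. assert (t m ^ 2 / 2 + t n ^ 2 / 2 - t m * t n = (t m - t n) ^ 2 / 2) by field.
   assert (h := pow2_ge_0 (t m - t n)). assert (t m * t n <= t m ^ 2 / 2 + t n ^ 2 / 2) by lra.
   replace (Kf lam m n * (t m ^ 2 / 2) + Kf lam m n * (t n ^ 2 / 2)) with (Kf lam m n * (t m ^ 2 / 2 + t n ^ 2 / 2)) by ring.
   apply Rmult_le_compat_l; auto. }
 rewrite (sum1_ext N _ (fun m => t m ^ 2 / 2 * sum1 N (fun n => Kf lam m n)
    + sum1 N (fun n => Kf lam m n * (t n ^ 2 / 2)))).
 2:{ intros m Hm. rewrite sum1_plus. rewrite <- sum1_scal. f_equal. apply sum1_ext; intros; ring. }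
 rewrite sum1_plus. rewrite sum1_swap.
 rewrite (sum1_ext N (fun n => sum1 N (fun m => Kf lam m n * (t n ^ 2 / 2)))
   (fun n => t n ^ 2 / 2 * sum1 N (fun m => Kf lam n m))).
 2:{ intros n Hn. rewrite <- sum1_scal. apply sum1_ext; intros. rewrite Kf_sym. ring. }
 assert (H : sum1 N (fun m => t m ^ 2 / 2 * sum1 N (fun n => Kf lam m n)) <= sum1 N (fun m => PI ^ 2 / 3 * (t m ^ 2 / 2))).
 { apply sum1_le; intros m Hm. assert (Hr := row_bound lam Hinc N m Hm).
   assert (0 <= t m ^ 2 / 2) by (assert (0 <= t m ^ 2) by apply pow2_ge_0; lra). nra. }
 rewrite sum1_scal in H.
 assert (E2 : sum1 N (fun m => t m ^ 2 / 2) = / 2 * sum1 N (fun n => t n ^ 2))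
   by (rewrite <- sum1_scal; apply sum1_ext; intros; unfold Rdiv; ring).
 rewrite E2 in H. lra.
Qed.
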